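(* Let $\varepsilon>0$ be such that $1/\varepsilon\ge 3$ is an integer, let $I$ be an input of offline Ordered Open End Bin Packing, and let $\mathrm{OPT}$ be an optimal solution for $I$ with cost $\mathrm{opt}$. Then there is a feasible solution $\mathrm{OPT}'$ of cost at most $(1+\varepsilon^2)\,\mathrm{opt}+1$ such that every exceeding item of a bin of $\mathrm{OPT}'$ has size at least $\varepsilon^2$.
   Context: Ordered Open End Bin Packing (offline): the input is a sequence of items $1,\dots,n$ with sizes in $(0,1]$. A feasible solution partitions the items into bins such that for every bin, the total size of all its items except the one of maximum index is strictly smaller than $1$ (i.e., items are added to a bin in index order, and an item may be added only while the bin's current total size is strictly below $1$). The cost is the number of bins. For a bin $B$ of a feasible solution, if the total size of the items in $B$ is at least $1$, the exceeding item of $B$ is the item of maximum index in $B$; if the total size of $B$ is strictly below $1$, $B$ has no exceeding item. *)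

(* Defs.v *)
From mathcomp Require Import all_boot all_order all_algebra.
From mathcomp Require Import reals.
Set Implicit Arguments. Unset Strict Implicit. Unset Printing Implicit Defensive.
Import Order.TTheory GRing.Theory Num.Theory.
Local Open Scope ring_scope.

(* An instance: n items indexed by 'I_n (index order = order of 'I_n),
   item i has size a i. A solution is a partition P of the item set into
   (nonempty, pairwise disjoint) bins; its cost is #|P|. *)

Definition oeb_input (R : realType) (n : nat) (a : 'I_n -> R) : Prop :=
  forall i, 0 < a i <= 1.

Definition max_item (n : nat) (B : {set 'I_n}) (j : 'I_n) : Prop :=
  j \in B /\ forall i, i \in B -> (i <= j)%N.

Definition oeb_feasible (R : realType) (n : nat) (a : 'I_n -> R)
    (P : {set {set 'I_n}}) : Prop :=
  partition P [set: 'I_n] /\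
  forall B, B \in P -> forall j, max_item B j ->
    \sum_(i in B | i != j) a i < 1.

Definition oeb_optimal (R : realType) (n : nat) (a : 'I_n -> R)
    (P : {set {set 'I_n}}) : Prop :=
  oeb_feasible a P /\ forall Q, oeb_feasible a Q -> (#|P| <= #|Q|)%N.

Definition exceeding_item (R : realType) (n : nat) (a : 'I_n -> R)
    (B : {set 'I_n}) (j : 'I_n) : Prop :=
  1 <= \sum_(i in B) a i /\ max_item B j.

(* Main.v *)
Require Import Defs.
From mathcomp Require Import all_boot all_order all_algebra.
From mathcomp Require Import reals.
Import Order.TTheory GRing.Theory Num.Theory.
Local Open Scope ring_scope.

Lemma sum_subset (R : realType) (T : finType) (F : T -> R) (A B : pred T) :
  (forall i, 0 <= F i) -> (forall i, A i -> B i) ->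
  \sum_(i | A i) F i <= \sum_(i | B i) F i.
Proof.
move=> F0 AB; rewrite [X in X <= _]big_mkcond [X in _ <= X]big_mkcond /=.
apply: ler_sum => i _; case: (boolP (A i)) => Ai; first by rewrite (AB _ Ai).
by case: (B i).
Qed.

Lemma max_uniq (n : nat) (B : {set 'I_n}) j j' :
  max_item B j -> max_item B j' -> j = j'.
Proof.
move=> [jB Hj] [jB' Hj']; apply: ord_inj; apply/eqP; rewrite eqn_leq.
by rewrite Hj' // Hj.
Qed.

Arguments max_uniq {n B j j'}.

Theorem mainTheorem2 (R : realType) (eps : R) (n : nat) (a : 'I_n -> R)
    (OPT : {set {set 'I_n}}) :
  0 < eps ->
  (exists k : nat, (3 <= k)%N /\ eps^-1 = k%:R) ->
  oeb_input a ->
  oeb_optimal a OPT ->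
  exists OPT' : {set {set 'I_n}},
    oeb_feasible a OPT' /\
    (#|OPT'|%:R <= (1 + eps ^+ 2) * #|OPT|%:R + 1) /\
    (forall B, B \in OPT' -> forall j, exceeding_item a B j -> eps ^+ 2 <= a j).
Proof.
move=> eps0 [k [k3 epsk]] ain [[Opart Ofeas] _].
have a0 : forall i, 0 <= a i by move=> i; case/andP: (ain i) => /ltW.
set K := (k * k)%N.
have K0 : (0 < K)%N by rewrite muln_gt0 (leq_trans _ k3).
have epsK : eps ^+ 2 = (K%:R)^-1.
  by rewrite /K natrM -epsk -invrM ?unitfE ?invr_eq0 ?gt_eqF // invrK expr2.
case/and3P: Opart => /eqP Ocov Otriv O0.
have inP : forall x, pblock OPT x \in OPT.
  by move=> x; apply: pblock_mem; rewrite Ocov inE.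
have xinP : forall x, x \in pblock OPT x by move=> x; rewrite mem_pblock Ocov inE.
set T := [set j | [exists B in OPT, (1 <= \sum_(i in B) a i) && (j \in B)
             && [forall i in B, (i <= j)%N] && (a j < eps ^+ 2)]].
have TP : forall P y, P \in OPT -> y \in P -> y \in T ->
    [/\ max_item P y, a y < eps ^+ 2 & 1 <= \sum_(i in P) a i].
  move=> P y PO yP; rewrite inE => /existsP [Q /andP [QO /andP [/andP [/andP [HQ yQ] /forallP Hm] ay]]].
  have QP : Q = P by rewrite -(def_pblock Otriv QO yQ) (def_pblock Otriv PO yP).
  subst Q; split => //; split => // i iP; exact: (implyP (Hm i) iP).
have TE : forall j, (j \in T) = [exists B in OPT, (1 <= \sum_(i in B) a i) && (j \in B)
             && [forall i in B, (i <= j)%N] && (a j < eps ^+ 2)] by move=> j; rewrite inE.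
clearbody T.
set s := enum T.
have idxT : forall y, y \in T -> (index y s < #|T|)%N.
  by move=> y yT; rewrite cardE index_mem mem_enum.
have Tn : (#|T| <= n)%N by apply: leq_trans (max_card _) _; rewrite card_ord.
pose h (x : 'I_n) : ({set 'I_n} + 'I_n.+1)%type :=
  if x \in T then inr (inord (index x s %/ K)) else inl (pblock OPT x).
exists (preim_partition h [set: 'I_n]).
have blockP : forall B, B \in preim_partition h [set: 'I_n] ->
   \sum_(i in B) a i < 1 \/ (B \in OPT /\ forall j, exceeding_item a B j -> eps ^+ 2 <= a j).
  move=> B /imsetP[x _ ->]; rewrite /h; case: ifP => xT.
  - left. set q := (index x s %/ K)%N.
    have qn : (q < n.+1)%N.
      by rewrite ltnS (leq_trans (leq_div _ _)) // ltnW // (leq_trans (idxT x xT)).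
    set B0 := [set y in _ | _].
    have memB : forall y, y \in B0 -> y \in T /\ (index y s %/ K)%N = q.
      move=> y; rewrite !inE /=; case: ifP => yT //= /eqP e; split => //.
      have {}e := congr1 (fun v => if v is inr w then val w else 0%N) e.
      have lt : (index y s %/ K < n.+1)%N.
        by rewrite ltnS (leq_trans (leq_div _ _)) // ltnW // (leq_trans (idxT y yT)).
      by move: e => /=; rewrite !inordK.
    have xB : x \in B0 by rewrite !inE /= xT eqxx.
    have cB : (#|B0| <= K)%N.
      pose r (y : 'I_n) : 'I_n.+1 := inord (index y s).
      have rinj : {in B0 &, injective r}.
        move=> y y' /memB [yT _] /memB [y'T _] /(congr1 val).
        have l1 : (index y s < n.+1)%N by rewrite ltnS ltnW // (leq_trans (idxT y yT)).
        have l2 : (index y' s < n.+1)%N by rewrite ltnS ltnW // (leq_trans (idxT y' y'T)).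
        rewrite /r /= !inordK // => e; 
        have h1 := @nth_index _ y y s; have h2 := @nth_index _ y y' s.
        rewrite !mem_enum in h1 h2.
        by rewrite -(h1 yT) -(h2 y'T) e.
      rewrite -(card_in_imset rinj).
      have sub : r @: B0 \subset [set (inord (q * K + val i)%N : 'I_n.+1) | i : 'I_K].
        apply/subsetP => z /imsetP[y yB ->]; apply/imsetP.
        exists (Ordinal (ltn_pmod (index y s) K0)) => //.
        rewrite /r /=; congr inord; rewrite {1}(divn_eq (index y s) K).
        by have [_ ->] := memB y yB.
      apply: leq_trans (subset_leq_card sub) _.
      by apply: leq_trans (leq_imset_card _ _) _; rewrite card_ord.
    apply: (@lt_le_trans _ _ (\sum_(i in B0) eps ^+ 2)).
      apply: ltr_sum; first by apply/hasP; exists x => //; rewrite mem_index_enum.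
      by move=> i /memB [iT _]; move: iT; rewrite TE => /existsP [P /andP [_ /andP [_ ->]]].
    rewrite sumr_const -mulr_natr.
    apply: (@le_trans _ _ (eps ^+ 2 * K%:R)).
      apply: ler_wpM2l; first by rewrite exprn_ge0 // ltW.
      by rewrite ler_nat.
    by rewrite epsK mulVf // pnatr_eq0 -lt0n.
  - set P := pblock OPT x.
    set B0 := [set y in _ | _].
    have memB : forall y, y \in B0 -> y \notin T /\ y \in P.
      move=> y; rewrite !inE /=; case: ifP => yT //= /eqP [] e.
      by split => //; rewrite e xinP.
    have xP : x \in P by exact: xinP.
    case: (arg_maxnP (fun i : 'I_n => val i) xP) => j jP Hj.
    have mj : max_item P j by split.
    case: (ltP (\sum_(i in P) a i) 1) => sP.
      left; apply: le_lt_trans sP; apply: sum_subset => //.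
      by move=> i /memB [].
    case: (ltP (a j) (eps ^+ 2)) => aj.
      left.
      have jT : j \in T.
        rewrite TE; apply/existsP; exists P; apply/andP; split; first exact: inP.
        have jP2 : j \in P := jP; rewrite sP jP2 aj andbT /=; apply/forallP => i; apply/implyP; exact: Hj.
      apply: le_lt_trans (Ofeas P (inP x) j mj).
      apply: sum_subset => // i /memB [iT iP]; rewrite iP /=.
      by apply/eqP => e; rewrite e jT in iT.
    right.
    have -> : B0 = P.
      apply/setP => y; rewrite !inE /=; case: ifP => yT.
        apply/esym/negbTE/negP => yP.
        have [my ay _] := TP P y (inP x) yP yT.
        by rewrite (max_uniq my mj) ltNge aj in ay.
      apply/eqP/idP => [[e] | yP]; first by rewrite e xinP.
      by rewrite (def_pblock Otriv (inP x) yP).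
    split; first exact: inP.
    by move=> j' [_ mj']; rewrite (max_uniq mj' mj).
split; [split | split].
- exact: preim_partitionP.
- move=> B BP j jm; case: (blockP B BP) => [lt1 | [BO _]].
    apply: le_lt_trans lt1; apply: sum_subset; first exact: a0.
    by move=> i /andP[].
  exact: Ofeas.
- have cardT : (#|T| <= #|OPT|)%N.
    rewrite -(card_in_imset (f:=pblock OPT)).
      by apply: subset_leq_card; apply/subsetP => z /imsetP[y _ ->]; exact: inP.
    move=> y y' yT y'T e.
    have [m1 _ _] := TP _ _ (inP y) (xinP y) yT.
    have y'P : y' \in pblock OPT y by rewrite e xinP.
    have [m2 _ _] := TP _ _ (inP y) y'P y'T.
    exact: max_uniq m1 m2.
  set c := ((#|T|.-1) %/ K).+1.
  have cardO : (#|preim_partition h [set: 'I_n]| <= #|OPT| + c)%N.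
    have -> : preim_partition h [set: 'I_n] =
      [set (fun v => [set y in [set: 'I_n] | v == h y]) x | x in h @: [set: 'I_n]].
      by rewrite -imset_comp.
    apply: leq_trans (leq_imset_card _ _) _.
    have sub : h @: [set: 'I_n] \subset inl @: OPT :|: inr @: [set (inord (val i) : 'I_n.+1) | i : 'I_c].
      apply/subsetP => _ /imsetP[x _ ->]; rewrite /h; case: ifP => xT; rewrite inE.
        apply/orP; right; apply/imsetP; exists (inord (index x s %/ K)) => //.
        apply/imsetP.
        have lt : (index x s %/ K < c)%N.
          rewrite ltnS leq_div2r // -ltnS prednK ?idxT //.
          by apply: leq_ltn_trans (idxT x xT).
        by exists (Ordinal lt).
      by apply/orP; left; apply/imsetP; exists (pblock OPT x).
    apply: leq_trans (subset_leq_card sub) _.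
    apply: leq_trans (leq_card_setU _ _).1 _.
    apply: leq_add; first exact: leq_imset_card.
    apply: leq_trans (leq_imset_card _ _) _.
    apply: leq_trans (leq_imset_card _ _) _.
    by rewrite card_ord.
  have qb : ((#|T|.-1 %/ K) * K <= #|OPT|)%N.
    by apply: leq_trans (leq_divM _ _) _; apply: leq_trans (leq_pred _) cardT.
  have qr : (#|T|.-1 %/ K)%:R <= #|OPT|%:R * eps ^+ 2 :> R.
    by rewrite epsK ler_pdivlMr ?ltr0n // -natrM ler_nat.
  apply: le_trans (_ : (#|OPT| + c)%:R <= _); first by rewrite ler_nat.
  rewrite /c -addn1 !natrD addrA lerD2r mulrDl mul1r lerD2l mulrC.
  exact: qr.
- move=> B BP j [ex jm]; case: (blockP B BP) => [lt1 | [_ H]]; last exact: H.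
  by rewrite ltNge ex in lt1.
Qed.
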